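(* Let $q \ge 5$ be a prime number, $s \in \mathbb Z_q^* \setminus \{1\}$ and $2 \le k \le q-1$. Let $\mathcal A = \{1,2,\dots,k-1\}$ and $\mathcal B = \{k,k+1,\dots,q-1\}$, regarded as sets of residue classes modulo $q$. Then neither $\mathcal A$ nor $\mathcal B$ is invariant under multiplication by $s$ (i.e. $s\mathcal A \neq \mathcal A$ and $s\mathcal B \neq \mathcal B$ in $\mathbb Z_q$). *)

(* Defs.v *)
From mathcomp Require Import all_boot all_algebra.
Set Implicit Arguments. Unset Strict Implicit. Unset Printing Implicit Defensive.
Import GRing.Theory.
Local Open Scope ring_scope.

Definition residues (q lo hi : nat) : {set 'F_q} :=
  [set x : 'F_q | x \in [seq (i%:R : 'F_q) | i <- iota lo (hi - lo)]].

Definition scale_set (q : nat) (s : 'F_q) (S : {set 'F_q}) : {set 'F_q} :=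
  [set s * x | x in S].

(* Main.v *)
Require Import Defs.
From mathcomp Require Import all_boot all_algebra.
From mathcomp Require Import zify.
Local Open Scope ring_scope.
Import GRing.Theory.

Section S.
Variable q : nat.
Hypothesis pq : prime q.

Lemma valF_lt (x : 'F_q) : (nat_of_ord x < q)%N.
Proof. case: x => v hv /=; move: hv; by rewrite Fp_cast. Qed.

Lemma valF_nat (x : 'F_q) : x = (nat_of_ord x)%:R.
Proof. by apply: ord_inj; rewrite /= val_Fp_nat // modn_small // valF_lt. Qed.

Lemma val_nat_small n : (n < q)%N -> nat_of_ord (n%:R : 'F_q) = n.
Proof. by move=> h; rewrite val_Fp_nat // modn_small. Qed.

Lemma mem_res lo hi (x : 'F_q) : (hi <= q)%N ->
  (x \in residues q lo hi) = (lo <= nat_of_ord x < hi)%N.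
Proof.
move=> hq; rewrite inE; apply/mapP/idP.
  case=> i; rewrite mem_iota => hi' ->.
  rewrite val_nat_small; first lia.
  lia.
move=> h; exists (nat_of_ord x); first by rewrite mem_iota; lia.
exact: valF_nat.
Qed.

Lemma valN (x : 'F_q) : x != 0 -> nat_of_ord (- x) = (q - nat_of_ord x)%N.
Proof.
move=> x0.
have xp : (0 < nat_of_ord x)%N.
  rewrite lt0n; apply: contra x0 => /eqP h; apply/eqP; apply: ord_inj; exact: h.
have hx := valF_lt x.
have -> : - x = (q - nat_of_ord x)%:R.
  apply/eqP; rewrite eq_sym -subr_eq0 opprK {2}(valF_nat x) -natrD subnK; last lia.
  by rewrite pchar_Fp_0.
by rewrite val_nat_small //; lia.
Qed.

Lemma key (s : 'F_q) (S : {set 'F_q}) m :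
  (1 <= m)%N -> (2 * m < q)%N ->
  (forall x : 'F_q, (x \in S) = (1 <= nat_of_ord x <= m)%N) ->
  (forall x, x \in S -> s * x \in S) -> s != 1 -> False.
Proof.
move=> m1 m2 hS inv s1.
have q1 : (1 < q)%N by lia.
have v1 : nat_of_ord (1 : 'F_q) = 1%N by exact: (@val_nat_small 1 q1).
have hs : s \in S by rewrite -[s]mulr1; apply: inv; rewrite hS v1.
rewrite hS in hs.
set t := nat_of_ord s in hs.
have t1 : t != 1%N.
  apply: contra s1 => /eqP h; apply/eqP; apply: ord_inj; rewrite v1; exact: h.
have t2 : (1 < t)%N by lia.
have dlt : (m %/ t < m)%N by apply: ltn_Pdiv; lia.
have e := divn_eq m t.
have r : (m %% t < t)%N by apply: ltn_pmod; lia.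
pose j := (m %/ t).+1.
have hj : (j%:R : 'F_q) \in S.
  rewrite hS val_nat_small /j; clearbody t; lia.
have := inv _ hj.
rewrite hS (valF_nat s) -natrM -/t val_nat_small /j; clearbody t; nia.
Qed.

End S.

Theorem lemma3 (q : nat) (s : 'F_q) (k : nat) :
  prime q -> (5 <= q)%N ->
  s != 0 -> s != 1 ->
  (2 <= k <= q.-1)%N ->
  scale_set s (residues q 1 k) != residues q 1 k /\
  scale_set s (residues q k q) != residues q k q.
Proof.
move=> pq q5 s0 s1 hk.
set A := residues q 1 k; set B := residues q k q.
have hA x : (x \in A) = (1 <= nat_of_ord x < k)%N by rewrite mem_res //; lia.
have hB x : (x \in B) = (k <= nat_of_ord x)%N by rewrite mem_res // (@valF_lt q pq x) andbT.
have v0 (x : 'F_q) : (x == 0) = (nat_of_ord x == 0%N).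
  by apply/eqP/eqP => [->|h] //; apply: ord_inj.
have gen : forall (X Y : {set 'F_q}),
  (forall x, x \in Y -> x != 0) -> (forall x, x != 0 -> (x \in X) || (x \in Y)) ->
  (forall x, x \in X -> x \notin Y) ->
  scale_set s X = X -> (forall y, y \in Y -> s * y \in Y).
  move=> X Y Y0 XY dXY e y hy.
  have sy0 : s * y != 0 by rewrite mulf_neq0 // Y0.
  case/orP: (XY _ sy0) => // hX.
  move: hX; rewrite -e => /imsetP [x hx /(mulfI s0) exy].
  by move: (dXY _ hx); rewrite -exy hy.
have A0 x : x \in A -> x != 0 by rewrite hA v0; lia.
have B0 x : x \in B -> x != 0 by rewrite hB v0; lia.
have AB x : x != 0 -> (x \in A) || (x \in B) by rewrite hA hB v0; lia.
have BA x : x != 0 -> (x \in B) || (x \in A) by rewrite hA hB v0; lia.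
have dAB x : x \in A -> x \notin B by rewrite hA hB; lia.
have dBA x : x \in B -> x \notin A by rewrite hA hB; lia.
have fin : (forall x, x \in A -> s * x \in A) -> (forall x, x \in B -> s * x \in B) -> False.
  move=> iA iB.
  have [small|big] := ltnP (2 * k.-1) q.
    apply: (@key q pq s A k.-1) => //; first lia.
    by move=> x; rewrite hA; lia.
  pose C := [set x : 'F_q | - x \in B].
  apply: (@key q pq s C (q - k)) => //; first lia; first lia.
    move=> x; rewrite inE hB.
    have [->|x0] := eqVneq x 0.
      rewrite oppr0; have h0 : nat_of_ord (0 : 'F_q) = 0%N by []; rewrite h0; lia.
    rewrite valN //; have := @valF_lt q pq x; move: x0; rewrite v0; lia.
  move=> x; rewrite [x \in C]inE => hx; rewrite [_ \in C]inE -mulrN; exact: iB.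
split; apply/eqP => e.
  apply: fin; first by move=> x hx; rewrite -e; apply: imset_f.
  exact: (gen A B).
apply: fin; last by move=> x hx; rewrite -e; apply: imset_f.
exact: (gen B A).
Qed.
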